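(* For every $n\in\mathbb{N}$ and every $l\in\{0,\ldots,n-1\}$ the polynomials $A_n^l$ defined in the context satisfy the two-step recurrence $$A_{n+1}^{l}=\frac{n+1}{2(n-l+1)(n+l+2)}\Big[\big((2n+3)\mathbf{x}+(2n+1)\overline{\mathbf{x}}\big)A_{n}^{l}-2n\,\mathbf{x}\overline{\mathbf{x}}\,A_{n-1}^{l}\Big],$$ and for every $l\in\mathbb{N}_0$, $$A_{l+1}^{l}=\tfrac14\big[(2l+3)\mathbf{x}+(2l+1)\overline{\mathbf{x}}\big]A_{l}^{l},\qquad A_{l}^{l}=(x_1-x_2\mathbf{e}_3)^l .$$
   Context: $\mathbb{H}$: real quaternions with basis $\mathbf{e}_0=1,\mathbf{e}_1,\mathbf{e}_2,\mathbf{e}_3$, $\mathbf{e}_i\mathbf{e}_j+\mathbf{e}_j\mathbf{e}_i=-2\delta_{ij}$ ($i,j=1,2,3$), $\mathbf{e}_1\mathbf{e}_2=\mathbf{e}_3$. A point $(x_0,x_1,x_2)\in\mathbb{R}^3$ is identified with $\mathbf{x}=x_0+x_1\mathbf{e}_1+x_2\mathbf{e}_2$, and $\overline{\mathbf{x}}=x_0-x_1\mathbf{e}_1-x_2\mathbf{e}_2$. Spherical coordinates: $x_0=r\cos\theta$, $x_1=r\sin\theta\cos\varphi$, $x_2=r\sin\theta\sin\varphi$. Let $P_k$ be the Legendre polynomials and $P_k^m(t)=(1-t^2)^{m/2}\frac{d^m}{dt^m}P_k(t)$ (no Condon–Shortley phase; $P_k^m=0$ for $m>k$). For $n\in\mathbb{N}_0$,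 $0\le m\le n+1$ put $$\mathcal{A}^{m,n}(\theta)=\tfrac12\Big(\sin^2\theta\,\tfrac{d}{dt}[P_{n+1}^m(t)]_{t=\cos\theta}+(n+1)\cos\theta\,P_{n+1}^m(\cos\theta)\Big).$$ For $n\in\mathbb{N}_0$, $l=0,\ldots,n$ define $$A_n^l(\mathbf{x})=\frac{2^{l+1}n!\,r^n}{(n+l+2)!}\Big[(n+l+2)\mathcal{A}^{l,n}(\theta)\big(\cos l\varphi-\sin l\varphi\,\mathbf{e}_3\big)+\mathcal{A}^{l+1,n}(\theta)\big(\cos((l+1)\varphi)\,\mathbf{e}_1+\sin((l+1)\varphi)\,\mathbf{e}_2\big)\Big],$$ a homogeneous polynomial of degree $n$ in $x_0,x_1,x_2$. *)

(* Defs.v *)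
From HB Require Import structures.
From mathcomp Require Import all_boot all_order all_algebra.
From mathcomp Require Import all_classical all_reals.
From mathcomp Require Import topology normedtype derive trigo.
Set Implicit Arguments. Unset Strict Implicit. Unset Printing Implicit Defensive.
Import Order.TTheory GRing.Theory Num.Theory numFieldNormedType.Exports.
Local Open Scope ring_scope.

Section Defs.
Variable R : realType.

Record quat := Quat { q0 : R; q1 : R; q2 : R; q3 : R }.

Definition qadd (p q : quat) : quat :=
  Quat (q0 p + q0 q) (q1 p + q1 q) (q2 p + q2 q) (q3 p + q3 q).

Definition qsub (p q : quat) : quat :=
  Quat (q0 p - q0 q) (q1 p - q1 q) (q2 p - q2 q) (q3 p - q3 q).

Definition qscale (c : R) (q : quat) : quat :=
  Quat (c * q0 q) (c * q1 q) (c * q2 q) (c * q3 q).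

(* Hamilton product: e_i e_i = -1, e1 e2 = e3, e2 e3 = e1, e3 e1 = e2. *)
Definition qmul (p q : quat) : quat :=
  Quat (q0 p * q0 q - q1 p * q1 q - q2 p * q2 q - q3 p * q3 q)
       (q0 p * q1 q + q1 p * q0 q + q2 p * q3 q - q3 p * q2 q)
       (q0 p * q2 q - q1 p * q3 q + q2 p * q0 q + q3 p * q1 q)
       (q0 p * q3 q + q1 p * q2 q - q2 p * q1 q + q3 p * q0 q).

Definition qone : quat := Quat 1 0 0 0.

Definition qpow (q : quat) (k : nat) : quat := iter k (qmul q) qone.

Definition legendre (k : nat) : {poly R} :=
  ((2 ^+ k * (k`!)%:R)^-1) *: (('X ^+ 2 - 1) ^+ k)^`(k).

(* Associated Legendre function without Condon-Shortley phase:
   P_k^m(t) = (1-t^2)^{m/2} d^m/dt^m P_k(t). *)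
Definition assoc_legendre (k m : nat) (t : R) : R :=
  (Num.sqrt (1 - t ^+ 2)) ^+ m * ((legendre k)^`(m)).[t].

Definition calA (m n : nat) (theta : R) : R :=
  2^-1 * ((sin theta) ^+ 2 * derive1 (assoc_legendre n.+1 m) (cos theta)
          + n.+1%:R * cos theta * assoc_legendre n.+1 m (cos theta)).

Definition Anl (n l : nat) (r theta phi : R) : quat :=
  let c := 2 ^+ l.+1 * (n`!)%:R * r ^+ n / ((n + l + 2)`!)%:R in
  let a := (n + l + 2)%:R * calA l n theta in
  let b := calA l.+1 n theta in
  qscale c (Quat (a * cos (l%:R * phi)) (b * cos (l.+1%:R * phi))
                 (b * sin (l.+1%:R * phi)) (- (a * sin (l%:R * phi)))).

(* x = x0 + x1 e1 + x2 e2 and its conjugate, in spherical coordinates. *)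
Definition xq (r theta phi : R) : quat :=
  Quat (r * cos theta) (r * sin theta * cos phi) (r * sin theta * sin phi) 0.

Definition xbarq (r theta phi : R) : quat :=
  Quat (r * cos theta) (- (r * sin theta * cos phi)) (- (r * sin theta * sin phi)) 0.

End Defs.

(* Main.v *)
Require Import Defs.
From HB Require Import structures.
From mathcomp Require Import all_boot all_order all_algebra.
From mathcomp Require Import all_classical all_reals.
From mathcomp Require Import topology normedtype derive trigo realfun.
From mathcomp Require Import ring lra zify.
Import Order.TTheory GRing.Theory Num.Theory numFieldNormedType.Exports.
Local Open Scope ring_scope.

Lemma lincomb1 {T : comNzRingType} {e1 e2 a1 b1 : T} (k1 : T) :
  a1 = b1 -> e1 - e2 = k1 * (a1 - b1) -> e1 = e2.
Proof. by move=> ->; rewrite subrr mulr0 => /eqP; rewrite subr_eq0 => /eqP. Qed.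

Lemma lincomb2 {T : comNzRingType} {e1 e2 a1 b1 a2 b2 : T} (k1 k2 : T) :
  a1 = b1 -> a2 = b2 -> e1 - e2 = k1 * (a1 - b1) + k2 * (a2 - b2) -> e1 = e2.
Proof. by move=> -> ->; rewrite !subrr !mulr0 addr0 => /eqP; rewrite subr_eq0 => /eqP. Qed.

Section Poly.
Variable R : realType.
Local Notation P k := (legendre R k).
Local Notation U k := (('X^2 - 1 : {poly R}) ^+ k).

Lemma derivnn (p : {poly R}) a b : p^`(a)^`(b) = p^`(b + a).
Proof. by rewrite /derivn iterD. Qed.

Lemma derivnX (f : {poly R}) j : ('X * f)^`(j.+1) = 'X * f^`(j.+1) + f^`(j) *+ j.+1.
Proof.
elim: j => [|j IH].
  by rewrite derivn1 derivn0 derivM derivX mul1r addrC.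
rewrite derivnS IH derivD derivMn derivM derivX mul1r -!derivnS mulrS.
ring.
Qed.

Lemma dU k : (U k.+1)^`() = ('X * U k) *+ (2 * k.+1).
Proof.
rewrite deriv_exp derivB derivXn derivC subr0 /= expr1; ring.
Qed.

Lemma U2 k : 'X^2 * U k = U k.+1 + U k.
Proof. rewrite (exprS _ k); ring. Qed.

Lemma F1U k : (U k.+1)^`(k.+2) =
  ('X * (U k)^`(k.+1) + (U k)^`(k) *+ k.+1) *+ (2 * k.+1).
Proof. by rewrite derivSn dU derivnMn derivnX. Qed.

Lemma F3U k : (U k.+2)^`(k.+3) =
  (U k.+1)^`(k.+1) *+ (2 * k.+2 * (2 * k + 3)) + (U k)^`(k.+1) *+ (4 * k.+1 * k.+2).
Proof.
have h : (U k.+2)^`()^`() = U k.+1 *+ (2 * k.+2 * (2 * k + 3)) + U k *+ (4 * k.+1 * k.+2).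
  rewrite dU derivMn derivM derivX mul1r dU mulrnAr mulrA -expr2 U2.
  ring.
rewrite !derivSn h derivD !derivMn derivnD !derivnMn.
by [].
Qed.

Definition lc k : R := (2 ^+ k * (k`!)%:R)^-1.

Lemma legE k : P k = (lc k)%:P * (U k)^`(k).
Proof. by rewrite mul_polyC. Qed.

Lemma fact_neq0 k : (k`!)%:R != 0 :> R.
Proof. by rewrite pnatr_eq0 -lt0n fact_gt0. Qed.

Lemma natS_neq0 k : (k.+1)%:R != 0 :> R.
Proof. by rewrite pnatr_eq0. Qed.

Lemma lcS k : lc k.+1 *+ (2 * k.+1) = lc k.
Proof.
rewrite /lc factS natrM exprS.
have h1 := fact_neq0 k; have h2 := natS_neq0 k.
rewrite -[_ *+ (2 * k.+1)]mulr_natr natrM; field.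
by rewrite h1 expf_neq0 ?pnatr_eq0 // addrC natr1. Qed.

Lemma lcSS k : lc k.+2 *+ (4 * k.+1 * k.+2) = lc k.
Proof.
rewrite -(lcS k) -(lcS k.+1) -!mulrnA; congr (_ *+ _); lia.
Qed.

Lemma F1 k : (P k.+1)^`() = 'X * (P k)^`() + P k *+ k.+1.
Proof.
rewrite !legE !derivM !derivC !mul0r !add0r -!derivnS F1U -(lcS k) polyCMn; ring.
Qed.

Lemma F3 k : (P k.+2)^`() = P k.+1 *+ (2 * k + 3) + (P k)^`().
Proof.
rewrite !legE !derivM !derivC !mul0r !add0r -!derivnS F3U -(lcSS k) -(lcS k.+1) !polyCMn.
ring.
Qed.

Lemma L1 k : 'X * (P k.+1)^`() = (P k)^`() + P k.+1 *+ k.+1.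
Proof.
have h1 := F1 k.+1; have h3 := F3 k; rewrite h1 in h3.
apply: (lincomb1 1 h3); ring.
Qed.

Lemma G1 k m : (P k.+1)^`(m.+1) = 'X * (P k)^`(m.+1) + (P k)^`(m) *+ (k.+1 + m).
Proof.
elim: m => [|m IH]; first by rewrite derivn1 derivn0 F1 addn0.
rewrite derivnS IH derivD derivMn derivM derivX mul1r -!derivnS.
ring.
Qed.

Lemma G2 k m : 'X * (P k.+1)^`(m.+1) + (P k.+1)^`(m) *+ m
   = (P k)^`(m.+1) + (P k.+1)^`(m) *+ k.+1.
Proof.
elim: m => [|m IH]; first by rewrite derivn1 derivn0 L1 mulr0n addr0.
have := congr1 deriv IH.
rewrite !derivD !derivMn derivM derivX mul1r -!derivnS => h.
rewrite mulrS; apply: (lincomb1 1 h); ring.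
Qed.

Lemma X2m1 : ('X^2 - 1 : {poly R}) = 'X^2 - 1%:P.
Proof. by rewrite polyC1. Qed.

Lemma sizeU k : size (U k) = (2 * k).+1.
Proof.
have hs : size ('X^2 - 1 : {poly R}) = 3 by rewrite X2m1 size_XnsubC.
have hn : U k != 0.
  by rewrite expf_neq0 // -size_poly_eq0 hs.
have := size_exp ('X^2 - 1 : {poly R}) k; rewrite hs /= => h.
by rewrite -h prednK // lt0n size_poly_eq0.
Qed.

Lemma leadU k : lead_coef (U k) = 1.
Proof. by rewrite lead_coef_exp X2m1 (monicP (monicXnsubC _ _)) // expr1n. Qed.

Lemma vanish k : (P k)^`(k.+1) = 0.
Proof.
rewrite /legendre derivnZ derivnn derivn_poly0 ?scaler0 // sizeU; lia.
Qed.

Lemma top k : (P k)^`(k) = ((k.*2)`!%:R * lc k)%:P.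
Proof.
rewrite /legendre derivnZ derivnn.
have hs : (size ((U k)^`(k + k)) <= 1)%N.
  apply/leq_sizeP => j hj; rewrite coef_derivn nth_default ?mul0rn // sizeU; lia.
rewrite (size1_polyC hs) coef_derivn addn0.
have -> : ((U k)`_(k + k)) = 1 by rewrite -(leadU k) lead_coefE sizeU addnn -mul2n.
by rewrite ffactnn addnn scale_polyC mulrC. Qed.

End Poly.
Section Ana.
Variable R : realType.

Lemma sqrt_cos (th : R) : 0 <= th <= pi -> Num.sqrt (1 - cos th ^+ 2) = sin th.
Proof. by move=> h; rewrite -sin2cos2 sqrtr_sqr ger0_norm // sin_ge0_pi. Qed.

Lemma assoc_cos k m (th : R) : 0 <= th <= pi ->
  assoc_legendre k m (cos th) = sin th ^+ m * ((legendre R k)^`(m)).[cos th].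
Proof. by move=> h; rewrite /assoc_legendre sqrt_cos. Qed.

Lemma key_deriv k m (th : R) : 0 <= th <= pi ->
  sin th ^+ 2 * derive1 (@assoc_legendre R k m) (cos th) =
  sin th ^+ m * (sin th ^+ 2 * ((legendre R k)^`(m.+1)).[cos th]
                 - m%:R * cos th * ((legendre R k)^`(m)).[cos th]).
Proof.
move=> hth.
have s0 : 0 <= sin th by apply: sin_ge0_pi.
have [hs|hs] := eqVneq (sin th) 0.
  rewrite hs expr0n /= !mul0r; case: m => [|m]; first by ring.
  by rewrite expr0n /= mul0r.
have spos : 0 < sin th by rewrite lt_neqAle eq_sym hs s0.
set t := cos th.
set p := (1 - 'X^2 : {poly R}).
set Q := (legendre R k)^`(m).
have pt : p.[t] = sin th ^+ 2 by rewrite /p !hornerE sin2cos2.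
have ppos : 0 < p.[t] by rewrite pt exprn_gt0.
have hg : is_derive t 1 (horner p) (p^`().[t]) := is_derive_poly _ _.
have hsq := is_derive1_sqrt ppos.
have hc := is_derive1_comp hsq hg.
have hx := is_deriveX m hc.
have hq : is_derive t 1 (horner Q) (Q^`().[t]) := is_derive_poly _ _.
have hm := is_deriveM hx hq.
have fe : @assoc_legendre R k m = ((Num.sqrt \o horner p) ^+ m * horner Q).
  by apply/funext => x; rewrite /assoc_legendre exprfctE mulrfctE /= /p !hornerE.
rewrite fe derive1E derive_val /= exprfctE /= pt sqrtr_sqr ger0_norm //.
rewrite /Q -derivnS /p derivB derivC derivXn /= !hornerE /=.
have sc : forall a b : R, a *: b = a * b by [].
rewrite !sc -derivnS; clear hm hx hq fe; rewrite /Q; clear Q.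
case: m => [|m]; first by rewrite /= ?mul0r; ring.
rewrite (exprS (sin th) m) /=; field; exact: hs.
Qed.
End Ana.

Lemma hG1 (R : realType) k m (t : R) : ((legendre R k.+1)^`(m.+1)).[t] =
   t * ((legendre R k)^`(m.+1)).[t] + ((legendre R k)^`(m)).[t] *+ (k.+1 + m).
Proof. by rewrite G1 !hornerE hornerMn. Qed.

Lemma hG2 (R : realType) k m (t : R) :
  t * ((legendre R k.+1)^`(m.+1)).[t] + ((legendre R k.+1)^`(m)).[t] *+ m
   = ((legendre R k)^`(m.+1)).[t] + ((legendre R k.+1)^`(m)).[t] *+ k.+1.
Proof. by have := congr1 (horner^~ t) (G2 R k m); rewrite !hornerE !hornerMn. Qed.

Lemma calA_eq (R : realType) m n (th : R) : 0 <= th <= pi ->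
  calA m n th = (n + m).+1%:R / 2 * sin th ^+ m * ((legendre R n)^`(m)).[cos th].
Proof.
move=> h; rewrite /calA key_deriv // assoc_cos // sin2cos2.
have g1 := @hG1 R n m (cos th); have g2 := @hG2 R n m (cos th).
apply: (lincomb2 (sin th ^+ m / 2) (- cos th * sin th ^+ m / 2) g1 g2).
ring.
Qed.

Section Quat.
Variable R : realType.

Definition Qf (l : nat) (phi a b : R) : quat R :=
  Quat (a * cos (l%:R * phi)) (b * cos (l.+1%:R * phi))
       (b * sin (l.+1%:R * phi)) (- (a * sin (l%:R * phi))).

Lemma qscale_Qf k l phi a b : qscale k (Qf l phi a b) = Qf l phi (k * a) (k * b).
Proof. by rewrite /qscale /Qf /=; congr Quat; ring. Qed.

Lemma qsub_Qf l phi a b a' b' :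
  qsub (Qf l phi a b) (Qf l phi a' b') = Qf l phi (a - a') (b - b').
Proof. by rewrite /qsub /Qf /=; congr Quat; ring. Qed.

Lemma qmulC_Qf k l phi a b :
  qmul (Quat k 0 0 0) (Qf l phi a b) = Qf l phi (k * a) (k * b).
Proof. by rewrite /qmul /Qf /=; congr Quat; ring. Qed.

Lemma xsum (al be r th phi : R) :
  qadd (qscale al (xq r th phi)) (qscale be (xbarq r th phi)) =
  Quat ((al + be) * (r * cos th)) ((al - be) * (r * sin th) * cos phi)
       ((al - be) * (r * sin th) * sin phi) 0.
Proof. by rewrite /qadd /qscale /xq /xbarq /=; congr Quat; ring. Qed.

Lemma xxbar (r th phi : R) : qmul (xq r th phi) (xbarq r th phi) = Quat (r ^+ 2) 0 0 0.
Proof.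
rewrite /qmul /xq /xbarq /=; congr Quat; try ring.
have h1 := cos2Dsin2 th; have h2 := cos2Dsin2 phi.
apply: (lincomb2 (r ^+ 2 * sin th ^+ 2) (r ^+ 2) h2 h1); ring.
Qed.

Lemma mul_Qf (u0 w : R) l phi a b :
  qmul (Quat u0 (w * cos phi) (w * sin phi) 0) (Qf l phi a b) =
  Qf l phi (u0 * a - w * b) (u0 * b + w * a).
Proof.
have e : l.+1%:R * phi = l%:R * phi + phi by rewrite -addn1 natrD mulrDl mul1r.
rewrite /qmul /Qf /= e cosD sinD; have h := cos2Dsin2 phi.
congr Quat; try ring.
  apply: (lincomb1 (- (w * b * cos (l%:R * phi))) h); ring.
apply: (lincomb1 (w * b * sin (l%:R * phi)) h); ring.
Qed.

Lemma Anl_Qf n l (r th phi : R) : 0 <= th <= pi ->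
  Anl n l r th phi = Qf l phi
    (2 ^+ l.+1 * (n`!)%:R * r ^+ n / ((n + l + 2)`!)%:R *
       ((n + l + 2)%:R * ((n + l).+1%:R / 2 * sin th ^+ l * ((legendre R n)^`(l)).[cos th])))
    (2 ^+ l.+1 * (n`!)%:R * r ^+ n / ((n + l + 2)`!)%:R *
       ((n + l.+1).+1%:R / 2 * sin th ^+ l.+1 * ((legendre R n)^`(l.+1)).[cos th])).
Proof.
move=> h; rewrite /Anl !calA_eq // /qscale /Qf /=; congr Quat; ring.
Qed.

End Quat.

Lemma natB_neq0 (R : realType) (a b : nat) : (b < a)%N -> a%:R - b%:R != 0 :> R.
Proof. by move=> h; rewrite -natrB ?pnatr_eq0; lia. Qed.

Lemma p_next (R : realType) n l (th : R) : (l <= n)%N ->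
  ((legendre R n.+1)^`(l)).[cos th] =
  (- (sin th ^+ 2) * ((legendre R n)^`(l.+1)).[cos th]
     + (n + l).+1%:R * cos th * ((legendre R n)^`(l)).[cos th]) / (n.+1%:R - l%:R).
Proof.
move=> hl; have nz : n.+1%:R - l%:R != 0 :> R by apply: natB_neq0; lia.
have g1 := @hG1 R n l (cos th); have g2 := @hG2 R n l (cos th).
set num := (X in X / _).
have H : ((legendre R n.+1)^`(l)).[cos th] * (n.+1%:R - l%:R) = num.
  rewrite /num sin2cos2; apply: (lincomb2 (cos th) (-1) g1 g2); ring.
by rewrite -H mulfK.
Qed.

Lemma p_prev (R : realType) m l (th : R) :
  ((legendre R m)^`(l)).[cos th] =
  (sin th ^+ 2 * ((legendre R m.+1)^`(l.+1)).[cos th]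
     + (m.+1%:R - l%:R) * cos th * ((legendre R m.+1)^`(l)).[cos th]) / (m.+1 + l)%:R.
Proof.
have nz : (m.+1 + l)%:R != 0 :> R by rewrite pnatr_eq0 addSn.
have g1 := @hG1 R m l (cos th); have g2 := @hG2 R m l (cos th).
set num := (X in X / _).
have H : ((legendre R m)^`(l)).[cos th] * (m.+1 + l)%:R = num.
  rewrite /num sin2cos2; apply: (lincomb2 (-1) (cos th) g1 g2); ring.
by rewrite -H mulfK.
Qed.

Lemma q_prev (R : realType) m l (th : R) :
  ((legendre R m)^`(l.+1)).[cos th] =
  cos th * ((legendre R m.+1)^`(l.+1)).[cos th]
  + ((legendre R m.+1)^`(l)).[cos th] *+ l - ((legendre R m.+1)^`(l)).[cos th] *+ m.+1.
Proof. have g2 := @hG2 R m l (cos th); apply: (lincomb1 (-1) g2); ring. Qed.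

Lemma part1 (R : realType) (r theta phi : R)
  (hr : 0 <= r) (ht0 : 0 <= theta) (htpi : theta <= pi) :
  (forall n l : nat, (0 < n)%N -> (l < n)%N ->
     Anl n.+1 l r theta phi =
     qscale (n.+1%:R / (2 * (n%:R - l%:R + 1) * (n + l + 2)%:R))
       (qsub
          (qmul (qadd (qscale (2 * n%:R + 3) (xq r theta phi))
                      (qscale (2 * n%:R + 1) (xbarq r theta phi)))
                (Anl n l r theta phi))
          (qscale (2 * n%:R)
             (qmul (qmul (xq r theta phi) (xbarq r theta phi))
                   (Anl n.-1 l r theta phi))))).
Proof.
move=> n l; case: n => [//|m] _ hl.
have hth : 0 <= theta <= pi by rewrite ht0 htpi.
rewrite !Anl_Qf // xsum xxbar mul_Qf qmulC_Qf !qscale_Qf qsub_Qf qscale_Qf /=.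
have hl' : (l <= m.+1)%N by lia.
rewrite (@p_next R m.+1 l theta hl') (@hG1 R m.+1 l (cos theta)).
rewrite (@p_prev R m l theta) (@q_prev R m l theta).
have e1 : (m.+2 + l + 2)`! = ((m+l+2).+2 * ((m+l+2).+1 * (m+l+2)`!))%N.
  by rewrite (_ : (m.+2 + l + 2 = (m+l+2).+2)%N) ?factS //; lia.
have e2 : (m.+1 + l + 2)`! = ((m+l+2).+1 * (m+l+2)`!)%N.
  by rewrite (_ : (m.+1 + l + 2 = (m+l+2).+1)%N) ?factS //; lia.
rewrite e1 e2 (factS m.+1) (factS m) !natrM !exprS.
have H0 := ler0n R m; have H1 := ler0n R l.
have H2 : l%:R <= m%:R :> R by rewrite ler_nat; lia.
have hf := fact_neq0 R (m + l + 2).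
congr Qf; field; rewrite hf /=; repeat (apply/andP; split); apply: lt0r_neq0; lra.
Qed.

Lemma qpow_eq (R : realType) (rho phi : R) l :
  qpow (Quat (rho * cos phi) 0 0 (- (rho * sin phi))) l =
  Quat (rho ^+ l * cos (l%:R * phi)) 0 0 (- (rho ^+ l * sin (l%:R * phi))).
Proof.
elim: l => [|l IH]; first by rewrite /qpow /= mul0r cos0 sin0 /qone; congr Quat; ring.
have e : l.+1%:R * phi = l%:R * phi + phi by rewrite -addn1 natrD mulrDl mul1r.
rewrite /qpow iterS -/(qpow _ l) IH /qmul /= e cosD sinD exprS; congr Quat; ring.
Qed.

Lemma part2 (R : realType) (r theta phi : R)
  (hr : 0 <= r) (ht0 : 0 <= theta) (htpi : theta <= pi) (l : nat) :
     Anl l.+1 l r theta phi =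
       qscale (4^-1)
         (qmul (qadd (qscale (2 * l%:R + 3) (xq r theta phi))
                     (qscale (2 * l%:R + 1) (xbarq r theta phi)))
               (Anl l l r theta phi))
     /\
     Anl l l r theta phi =
       qpow (Quat (r * sin theta * cos phi) 0 0 (- (r * sin theta * sin phi))) l.
Proof.
have hth : 0 <= theta <= pi by rewrite ht0 htpi.
have H0 := ler0n R l.
have hf := fact_neq0 R (l + l).
have e1 : (l.+1 + l + 2)`! = ((l+l).+3 * ((l+l).+2 * ((l+l).+1 * (l+l)`!)))%N.
  by rewrite (_ : (l.+1 + l + 2 = (l+l).+3)%N) ?factS //; lia.
have e2 : (l + l + 2)`! = ((l+l).+2 * ((l+l).+1 * (l+l)`!))%N.
  by rewrite (_ : (l + l + 2 = (l+l).+2)%N) ?factS //; lia.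
split.
  rewrite !Anl_Qf // xsum mul_Qf qscale_Qf.
  rewrite (@p_next R l l theta (leqnn l)) (@hG1 R l l (cos theta)) (vanish R l) horner0.
  rewrite e1 e2 (factS l) !natrM !exprS.
  congr Qf; field; rewrite ?hf /=; repeat (apply/andP; split); apply: lt0r_neq0; lra.
rewrite Anl_Qf // (vanish R l) horner0 (top R l) hornerC qpow_eq /Qf /lc.
rewrite e2 -addnn !natrM /=.
have hf2 := fact_neq0 R l.
rewrite exprMn (exprS 2 l).
congr Quat; try field; rewrite ?hf ?hf2 /=; try (repeat (apply/andP; split); apply: lt0r_neq0; lra).
all: rewrite expf_neq0 //=; try (apply/andP; split); apply: lt0r_neq0; lra.
Qed.

Theorem mainTheorem3 (R : realType) (r theta phi : R)
  (hr : 0 <= r) (ht0 : 0 <= theta) (htpi : theta <= pi) :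
  (forall n l : nat, (0 < n)%N -> (l < n)%N ->
     Anl n.+1 l r theta phi =
     qscale (n.+1%:R / (2 * (n%:R - l%:R + 1) * (n + l + 2)%:R))
       (qsub
          (qmul (qadd (qscale (2 * n%:R + 3) (xq r theta phi))
                      (qscale (2 * n%:R + 1) (xbarq r theta phi)))
                (Anl n l r theta phi))
          (qscale (2 * n%:R)
             (qmul (qmul (xq r theta phi) (xbarq r theta phi))
                   (Anl n.-1 l r theta phi)))))
  /\
  (forall l : nat,
     Anl l.+1 l r theta phi =
       qscale (4^-1)
         (qmul (qadd (qscale (2 * l%:R + 3) (xq r theta phi))
                     (qscale (2 * l%:R + 1) (xbarq r theta phi)))
               (Anl l l r theta phi))
     /\
     Anl l l r theta phi =
       qpow (Quat (r * sin theta * cos phi) 0 0 (- (r * sin theta * sin phi))) l).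
Proof.
split; first exact: part1.
move=> l; exact: part2.
Qed.
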